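(* Let $I$ be a countable set with a quasi-distance $d$ such that $\sup_{i\in I}|B_R(i)|<\infty$ for every $R>0$. Let $\mathcal{C}\subset B(\ell^2(I))$ be the set of non-expansive operators. Then: (1) if $A,B\in\mathcal{C}$ and $c\in\mathbb{C}$ then $A+B\in\mathcal{C}$ and $cA\in\mathcal{C}$; (2) if $A,B\in\mathcal{C}$ then $AB\in\mathcal{C}$; (3) if $\mathcal{J}$ is a filter on a set $S$, $A_j\in\mathcal{C}$ for all $j\in S$, and $\lim_{j\to\mathcal{J}}\|A-A_j\|=0$ for some $A\in B(\ell^2(I))$, then $A\in\mathcal{C}$. Consequently $\mathcal{C}$ is a $C^*$-algebra.
   Context: A quasi-distance on $I$ is $d:I\times I\to[0,\infty)$ with $d(i,i)=0$, $d(i,j)=d(j,i)$, $d(i,j)\le d(i,k)+d(k,j)$. $B_R(i)=\{j\in I:d(j,i)\le R\}$. $\{\delta_i\}_{i\in I}$ is the canonical orthonormal basis of $\ell^2(I)$. An operator $A\in B(\ell^2(I))$ is row non-expansive if for every $\varepsilon>0$ there exists $N>0$ with $\sum_{j\in I\setminus B_N(i)}|\langle A\delta_i,\delta_j\rangle|^2<\varepsilon$ for all $i\in I$; $A$ is non-expansive if both $A$ and $A^*$ are row non-expansive. The limit along a filter: $\lim_{j\to\mathcal{J}}\|A-A_j\|=0$ means for every $\varepsilon>0$ the set $\{j:\|A-A_j\|<\varepsilon\}$ belongs to $\mathcal{J}$. *)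

(* Defs.v *)
From Stdlib Require Import Reals List ClassicalEpsilon.
From Coquelicot Require Import Coquelicot.
Open Scope R_scope.

Section L2.
Variable I : Type.

(* An "operator" is a map on all functions I -> C; only its restriction to
   l^2(I) matters. *)
Definition vec := I -> C.
Definition op := vec -> vec.

Definition sqsum (x : vec) (l : list I) : R :=
  fold_right (fun i acc => Cmod (x i) ^ 2 + acc) 0 l.

Definition sqsum_le (x : vec) (S : R) : Prop :=
  forall l : list I, NoDup l -> sqsum x l <= S.

Definition l2 (x : vec) : Prop := exists S, sqsum_le x S.

Definition delta (i : I) : vec :=
  fun j => if excluded_middle_informative (j = i) then 1%C else 0%C.

Definition opnorm_le (A : op) (c : R) : Prop :=
  forall x S, sqsum_le x S -> sqsum_le (A x) (c ^ 2 * S).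

Definition bounded_op (A : op) : Prop :=
  (forall x y, l2 x -> l2 y ->
     A (fun k => (x k + y k)%C) = (fun k => (A x k + A y k)%C)) /\
  (forall (c : C) x, l2 x -> A (fun k => (c * x k)%C) = (fun k => (c * A x k)%C)) /\
  (exists M, 0 <= M /\ opnorm_le A M).

Definition op_add (A B : op) : op := fun x k => (A x k + B x k)%C.
Definition op_scal (c : C) (A : op) : op := fun x k => (c * A x k)%C.
Definition op_sub (A B : op) : op := fun x k => (A x k - B x k)%C.
Definition op_mul (A B : op) : op := fun x => A (B x).

Variable d : I -> I -> R.

Definition quasi_distance : Prop :=
  (forall i j, 0 <= d i j) /\ (forall i, d i i = 0) /\
  (forall i j, d i j = d j i) /\ (forall i j k, d i j <= d i k + d k j).

(* m i j stands for <T delta_i, delta_j>.  Row non-expansive: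
   forall eps>0 exists N>0, forall i,
   sum_{j notin B_N(i)} |m i j|^2 < eps  (the sum is an unordered sum of
   nonnegative terms, i.e. the sup of finite partial sums). *)
Definition row_nonexp_entries (m : I -> I -> C) : Prop :=
  forall eps, 0 < eps -> exists N, 0 < N /\
    forall i, exists S, S < eps /\
      forall l : list I, NoDup l -> (forall j, In j l -> N < d j i) ->
        fold_right (fun j acc => Cmod (m i j) ^ 2 + acc) 0 l <= S.

(* <A delta_i, delta_j> = (A delta_i) j, and
   <A^* delta_i, delta_j> = <delta_i, A delta_j> = conj ((A delta_j) i). *)
Definition nonexpansive (A : op) : Prop :=
  row_nonexp_entries (fun i j => A (delta i) j) /\
  row_nonexp_entries (fun i j => Cconj (A (delta j) i)).

Definition inC (A : op) : Prop := bounded_op A /\ nonexpansive A.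

End L2.

Arguments sqsum {I}. Arguments sqsum_le {I}. Arguments l2 {I}.
Arguments delta {I}. Arguments opnorm_le {I}. Arguments bounded_op {I}.
Arguments op_add {I}. Arguments op_scal {I}. Arguments op_sub {I}.
Arguments op_mul {I}. Arguments quasi_distance {I}.
Arguments row_nonexp_entries {I}. Arguments nonexpansive {I}. Arguments inC {I}.

(* Main.v *)
Require Import Defs.
From Stdlib Require Import Reals List ClassicalEpsilon.
From Coquelicot Require Import Coquelicot.
From Stdlib Require Import Lra Lia Psatz FunctionalExtensionality Classical.
Open Scope R_scope.

Definition rsum {I : Type} (f : I -> R) (l : list I) : R :=
  fold_right (fun j acc => f j + acc) 0 l.
Definition csum {I : Type} (f : I -> C) (l : list I) : C :=
  fold_right (fun j acc => (f j + acc)%C) 0%C l.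

Lemma sqsum_rsum {I} (x : vec I) l : sqsum x l = rsum (fun k => Cmod (x k) ^ 2) l.
Proof. reflexivity. Qed.

Lemma rsum_app {I} f (l1 l2 : list I) : rsum f (l1++l2) = rsum f l1 + rsum f l2.
Proof. induction l1; simpl; [lra | rewrite IHl1; lra]. Qed.

Lemma rsum_le {I} (f g : I -> R) l : (forall k, In k l -> f k <= g k) -> rsum f l <= rsum g l.
Proof. induction l; simpl; intros H; [lra|]. apply Rplus_le_compat; auto. Qed.

Lemma rsum_ext {I} (f g : I -> R) l : (forall k, In k l -> f k = g k) -> rsum f l = rsum g l.
Proof. induction l; simpl; intros H; [lra|]. rewrite H, IHl; auto. Qed.

Lemma rsum_nonneg {I} (f : I -> R) l : (forall k, In k l -> 0 <= f k) -> 0 <= rsum f l.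
Proof. induction l; simpl; intros H; [lra|]. pose proof (H a (or_introl eq_refl)).
  pose proof (IHl (fun k h => H k (or_intror h))). lra. Qed.

Lemma rsum_zero {I} (l : list I) : rsum (fun _ => 0) l = 0.
Proof. induction l; simpl; lra. Qed.

Lemma rsum_plus {I} (f g : I -> R) l : rsum (fun k => f k + g k) l = rsum f l + rsum g l.
Proof. induction l; simpl; lra. Qed.

Lemma rsum_scal {I} c (f : I -> R) l : rsum (fun k => c * f k) l = c * rsum f l.
Proof. induction l; simpl; [lra|]. rewrite IHl; lra. Qed.

Lemma rsum_const_le {I} (f : I -> R) l c : (forall k, In k l -> f k <= c) -> rsum f l <= INR (length l) * c.
Proof. induction l; intros H; [simpl; lra|]. cbn [length]. rewrite S_INR.
  unfold rsum; cbn [fold_right]; fold (rsum f l).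
  pose proof (H a (or_introl eq_refl)). pose proof (IHl (fun k h => H k (or_intror h))). lra. Qed.

Lemma rsum_swap {I J} (f : I -> J -> R) l1 l2 :
  rsum (fun i => rsum (f i) l2) l1 = rsum (fun j => rsum (fun i => f i j) l1) l2.
Proof. induction l1; simpl.
  - symmetry. apply rsum_zero.
  - rewrite IHl1. rewrite <- rsum_plus. reflexivity. Qed.

Lemma rsum_incl {I} (f : I -> R) (l' l : list I) : (forall k, 0 <= f k) -> NoDup l' -> incl l' l -> rsum f l' <= rsum f l.
Proof. intros Hf Hl'. revert l. induction Hl' as [|a l' Ha Hl' IH]; intros l Hinc; simpl.
  - apply rsum_nonneg; auto.
  - assert (Ia : In a l) by (apply Hinc; left; auto).
    destruct (in_split _ _ Ia) as [l1 [l2 ->]].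
    rewrite rsum_app; simpl.
    assert (rsum f l' <= rsum f (l1 ++ l2)).
    { apply IH. intros k Hk. assert (Hk' : In k (l1 ++ a :: l2)) by (apply Hinc; right; auto).
      apply in_app_or in Hk'. apply in_or_app. destruct Hk' as [h|[h|h]]; auto. subst; contradiction. }
    rewrite rsum_app in H. lra. Qed.

Definition pf {I} (P : I -> Prop) (k : I) : bool :=
  if excluded_middle_informative (P k) then true else false.

Lemma pf_true {I} (P : I -> Prop) k : pf P k = true <-> P k.
Proof. unfold pf. destruct (excluded_middle_informative (P k)); split; intros; auto; discriminate. Qed.

Lemma in_filter_pf {I} (P : I -> Prop) k l : In k (filter (pf P) l) <-> In k l /\ P k.
Proof. rewrite filter_In, pf_true. tauto. Qed.

Lemma rsum_filter {I} (P : I -> Prop) (f : I -> R) l :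
  rsum f l = rsum f (filter (pf P) l) + rsum f (filter (pf (fun k => ~ P k)) l).
Proof. induction l as [|a l IH]; simpl; [lra|]. unfold pf in *.
  destruct (excluded_middle_informative (P a)) as [h|h];
  destruct (excluded_middle_informative (~ P a)) as [h'|h']; try tauto; simpl; rewrite IH; lra. Qed.

Lemma csum_bound {I} (h : I -> C) l : Cmod (csum h l) <= rsum (fun k => Cmod (h k)) l.
Proof. induction l; simpl. - rewrite Cmod_0; lra.
  - eapply Rle_trans; [apply Cmod_triangle|]. lra. Qed.

Lemma csum_RtoC {I} (f : I -> R) l : csum (fun k => RtoC (f k)) l = RtoC (rsum f l).
Proof. induction l; simpl; auto. rewrite IHl, RtoC_plus. reflexivity. Qed.

Lemma csum_ext {I} (f g : I -> C) l : (forall k, In k l -> f k = g k) -> csum f l = csum g l.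
Proof. induction l; simpl; intros H; auto. rewrite H, IHl; auto. Qed.

Lemma sq_le_sq (p q : R) : 0 <= q -> p^2 <= q^2 -> p <= q.
Proof. intros. destruct (Rle_dec p q); auto. nra. Qed.

Lemma sq_step (a b p P Q : R) : 0 <= P -> 0 <= Q -> p^2 <= P*Q -> (a*b+p)^2 <= (a^2+P)*(b^2+Q).
Proof. intros HP HQ Hp.
  set (X := a^2*Q + b^2*P).
  assert (HX : 0 <= X) by (unfold X; nra).
  assert (HX2 : (2*a*b*p)^2 <= X^2).
  { unfold X. assert (H1 : 0 <= a^2*b^2*(P*Q - p^2)).
    { apply Rmult_le_pos; [|lra]. apply Rmult_le_pos; apply pow2_ge_0. }
    assert (H2 : 0 <= (a^2*Q - b^2*P)^2) by apply pow2_ge_0.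
    replace ((a^2*Q + b^2*P)^2) with ((a^2*Q - b^2*P)^2 + 4*(a^2*b^2*(P*Q)))  by ring.
    replace ((2*a*b*p)^2) with (4*(a^2*b^2*p^2)) by ring. nra. }
  assert (2*a*b*p <= X).
  { apply sq_le_sq; auto. }
  unfold X in *. nra. Qed.

Lemma CS {I} (f g : I -> R) l :
  (rsum (fun k => f k * g k) l)^2 <= rsum (fun k => f k ^2) l * rsum (fun k => g k ^2) l.
Proof. induction l; simpl. - lra.
  - apply sq_step; auto; apply rsum_nonneg; intros; apply pow2_ge_0. Qed.

Lemma le_sq (p q : R) : 0 <= p -> p <= q -> p^2 <= q^2.
Proof. intros; nra. Qed.

Lemma Cmod_plus_sq (a b : C) : Cmod (a + b) ^ 2 <= 2 * Cmod a ^ 2 + 2 * Cmod b ^ 2.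
Proof. pose proof (Cmod_triangle a b). pose proof (Cmod_ge_0 (a+b)).
  pose proof (Cmod_ge_0 a). pose proof (Cmod_ge_0 b).
  revert H H0 H1 H2. generalize (Cmod (a+b)) (Cmod a) (Cmod b). intros x y z ? ? ? ?.
  assert (x^2 <= (y+z)^2) by (apply le_sq; auto). pose proof (pow2_ge_0 (y-z)). nra. Qed.

Lemma eps_lim (a b K : R) : 0 <= K -> (forall e, 0 < e -> a <= b + K * e) -> a <= b.
Proof. intros HK H. destruct (Rle_dec a b); auto.
  assert (0 < (a - b) / (2*(K+1))). { apply Rdiv_lt_0_compat; lra. }
  specialize (H _ H0). exfalso.
  assert (K * ((a - b) / (2 * (K + 1))) < a - b).
  { unfold Rdiv. rewrite <- Rmult_assoc. apply (Rmult_lt_reg_r (2*(K+1))). lra.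
    rewrite Rmult_assoc, Rinv_l by lra. nra. }
  lra. Qed.
Lemma sqsum_le_nonneg {I} (x : vec I) S : sqsum_le x S -> 0 <= S.
Proof. intros H. specialize (H nil (NoDup_nil _)). simpl in H. exact H. Qed.

Lemma sqsum_le_mono {I} (x : vec I) S S' : sqsum_le x S -> S <= S' -> sqsum_le x S'.
Proof. intros H HS l Hl. specialize (H l Hl). lra. Qed.

Lemma sqsum_le_coord {I} (x : vec I) S i : sqsum_le x S -> Cmod (x i)^2 <= S.
Proof. intros H. assert (Hn : NoDup (i::nil)) by (constructor; [auto|constructor]).
  specialize (H (i::nil) Hn). simpl in H. lra. Qed.

Lemma opnorm_coord {I} (T : op I) c x S i : opnorm_le T c -> sqsum_le x S -> Cmod (T x i)^2 <= c^2 * S.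
Proof. intros HT Hx. apply sqsum_le_coord. apply HT; auto. Qed.

Lemma delta_eq {I} (i : I) : delta i i = 1%C.
Proof. unfold delta. destruct (excluded_middle_informative (i = i)); congruence. Qed.

Lemma delta_ne {I} (i j : I) : j <> i -> delta i j = 0%C.
Proof. unfold delta. destruct (excluded_middle_informative (j = i)); congruence. Qed.

Lemma sqsum_le_fin {I} (x : vec I) L : NoDup L -> (forall k, ~ In k L -> x k = 0%C) -> sqsum_le x (sqsum x L).
Proof. intros HL Hx l Hl. rewrite !sqsum_rsum. rewrite (rsum_filter (fun k => In k L)).
  rewrite (rsum_ext _ (fun _ => 0) (filter (pf (fun k => ~ In k L)) l)).
  2:{ intros k Hk. apply in_filter_pf in Hk. rewrite Hx by tauto. rewrite Cmod_0. ring. }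
  rewrite rsum_zero, Rplus_0_r. apply rsum_incl.
  - intros; apply pow2_ge_0.
  - apply NoDup_filter; auto.
  - intros k Hk. apply in_filter_pf in Hk. tauto.
Qed.

Lemma sqsum_le_delta {I} (i : I) : sqsum_le (delta i) 1.
Proof. eapply sqsum_le_mono. apply (sqsum_le_fin _ (i::nil)). constructor; [auto|constructor].
  intros k Hk. apply delta_ne. intros ->. apply Hk; left; auto.
  simpl. rewrite delta_eq, Cmod_1. lra. Qed.

Lemma sqsum_le_add {I} (x y : vec I) S T : sqsum_le x S -> sqsum_le y T -> sqsum_le (fun k => x k + y k)%C (2*S+2*T).
Proof. intros Hx Hy l Hl. specialize (Hx l Hl). specialize (Hy l Hl). rewrite sqsum_rsum in *.
  eapply Rle_trans. apply rsum_le with (g := fun k => 2*Cmod (x k)^2 + 2 * Cmod (y k)^2). intros; apply Cmod_plus_sq.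
  rewrite rsum_plus, !rsum_scal. lra. Qed.

Lemma sqsum_le_scal {I} (x : vec I) S c : sqsum_le x S -> sqsum_le (fun k => c * x k)%C (Cmod c ^2 * S).
Proof. intros Hx l Hl. specialize (Hx l Hl). rewrite sqsum_rsum in *.
  rewrite (rsum_ext _ (fun k => Cmod c^2 * Cmod (x k)^2)). rewrite rsum_scal. pose proof (pow2_ge_0 (Cmod c)). nra.
  intros; rewrite Cmod_mult; ring. Qed.

Lemma sqsum_le_dom {I} (x y : vec I) S : (forall k, Cmod (y k) <= Cmod (x k)) -> sqsum_le x S -> sqsum_le y S.
Proof. intros Hd Hx l Hl. specialize (Hx l Hl). rewrite sqsum_rsum in *. eapply Rle_trans; [|exact Hx].
  apply rsum_le. intros k _. apply le_sq; [apply Cmod_ge_0|auto]. Qed.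

Definition restr {I} (x : vec I) (L : list I) : vec I :=
  fun k => if excluded_middle_informative (In k L) then x k else 0%C.

Lemma restr_in {I} (x : vec I) L k : In k L -> restr x L k = x k.
Proof. unfold restr; destruct (excluded_middle_informative (In k L)); tauto. Qed.
Lemma restr_out {I} (x : vec I) L k : ~ In k L -> restr x L k = 0%C.
Proof. unfold restr; destruct (excluded_middle_informative (In k L)); tauto. Qed.

Lemma restr_dom {I} (x : vec I) L k : Cmod (restr x L k) <= Cmod (x k).
Proof. unfold restr; destruct (excluded_middle_informative (In k L)). lra. rewrite Cmod_0; apply Cmod_ge_0. Qed.

Lemma l2_of {I} (x : vec I) S : sqsum_le x S -> l2 x.
Proof. intros; exists S; auto. Qed.

Lemma sqsum_le_restr {I} (x : vec I) L : NoDup L -> sqsum_le (restr x L) (sqsum x L).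
Proof. intros HL. eapply sqsum_le_mono. apply sqsum_le_fin. exact HL. intros; apply restr_out; auto.
  rewrite !sqsum_rsum. right. apply rsum_ext. intros; rewrite restr_in; auto. Qed.

Definition lin {I} (T : op I) : Prop :=
  (forall x y, l2 x -> l2 y -> T (fun k => (x k + y k)%C) = (fun k => (T x k + T y k)%C)) /\
  (forall (c : C) x, l2 x -> T (fun k => (c * x k)%C) = (fun k => (c * T x k)%C)).

Lemma bounded_lin {I} (T : op I) : bounded_op T -> lin T.
Proof. intros [h1 [h2 _]]; split; auto. Qed.

Lemma l2_zero {I} : l2 (fun _ : I => 0%C).
Proof. exists (sqsum (fun _ : I => 0%C) nil). apply sqsum_le_fin; [constructor|auto]. Qed.

Lemma lin_zero {I} (T : op I) : lin T -> T (fun _ => 0%C) = (fun _ => 0%C).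
Proof. intros [_ Hs]. pose proof (Hs 0%C _ (@l2_zero I)) as H.
  assert (E : (fun k : I => (0 * 0)%C) = fun _ : I => 0%C)
    by (apply functional_extensionality; intros; ring).
  cbv beta in H. rewrite E in H. rewrite H. apply functional_extensionality; intros; ring. Qed.

Lemma l2_sdelta {I} (c : C) (a : I) : l2 (fun k => (c * delta a k)%C).
Proof. eexists. apply sqsum_le_scal. apply sqsum_le_delta. Qed.

Lemma lin_restr {I} (T : op I) : lin T -> forall L, NoDup L -> forall w k,
  T (restr w L) k = csum (fun j => (w j * T (delta j) k)%C) L.
Proof. intros HT L HL. induction HL as [|a L Ha HL IH]; intros w k.
  - assert (E : restr w nil = fun _ => 0%C).
    { apply functional_extensionality; intros; apply restr_out; auto. }
    rewrite E, lin_zero; auto.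
  - assert (E : restr w (a::L) = fun k => ((fun k => w a * delta a k) k + restr w L k)%C).
    { apply functional_extensionality; intros j. destruct (excluded_middle_informative (j = a)) as [->|hne].
      + rewrite restr_in by (left; auto). rewrite restr_out by auto. rewrite delta_eq. ring.
      + rewrite delta_ne by auto. destruct (excluded_middle_informative (In j L)).
        * rewrite !restr_in by (try right; auto). ring.
        * rewrite !restr_out; [ring | auto | intros [h|h]; auto]. }
    pose proof HT as [Ha' Hs]. rewrite E, Ha'.
    + simpl. rewrite (Hs (w a) (delta a)). rewrite IH. reflexivity. eexists; apply sqsum_le_delta.
    + apply l2_sdelta.
    + eexists; apply sqsum_le_restr; auto.
Qed.

Lemma dual_core {I} (T : op I) L i : lin T -> NoDup L ->
  T (restr (fun k => Cconj (T (delta k) i)) L) i = RtoC (rsum (fun j => Cmod (T (delta j) i)^2) L) /\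
  sqsum_le (restr (fun k => Cconj (T (delta k) i)) L) (rsum (fun j => Cmod (T (delta j) i)^2) L).
Proof. intros HT HL. split.
  - rewrite (lin_restr T HT L HL). rewrite <- csum_RtoC. apply csum_ext. intros j _.
    rewrite Cmod2_conj. ring.
  - eapply sqsum_le_mono. apply sqsum_le_restr. exact HL.
    rewrite sqsum_rsum. right. apply rsum_ext. intros k hk. rewrite Cmod_conj; auto.
Qed.

Lemma Q_le (Q e : R) : 0 <= Q -> 0 <= e -> Q^2 <= e * Q -> Q <= e.
Proof. intros. destruct (Rle_dec Q e); auto. nra. Qed.

Lemma Cmod_RtoC_pos (Q : R) : 0 <= Q -> Cmod (RtoC Q) = Q.
Proof. intros; rewrite Cmod_R, Rabs_pos_eq; auto. Qed.

Lemma dual_norm {I} (T : op I) c L i : lin T -> opnorm_le T c -> NoDup L ->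
  rsum (fun j => Cmod (T (delta j) i)^2) L <= c^2.
Proof. intros HT Hc HL. destruct (dual_core T L i HT HL) as [E Hy].
  pose proof (opnorm_coord T c _ _ i Hc Hy) as H. rewrite E in H.
  assert (HQ : 0 <= rsum (fun j => Cmod (T (delta j) i)^2) L) by (apply rsum_nonneg; intros; apply pow2_ge_0).
  rewrite Cmod_RtoC_pos in H by auto. apply Q_le; auto. apply pow2_ge_0. Qed.
Definition row_bound {I} (d : I -> I -> R) (m : I -> I -> C) eps N :=
  forall i l, NoDup l -> (forall j, In j l -> N < d j i) -> rsum (fun j => Cmod (m i j)^2) l <= eps.

Lemma row_iff {I} (d : I -> I -> R) m : row_nonexp_entries d m <->
  forall eps, 0 < eps -> exists N, 0 < N /\ row_bound d m eps N.
Proof. split.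
  - intros H eps he. destruct (H eps he) as [N [HN H']]. exists N; split; auto. intros i l Hl Hf.
    destruct (H' i) as [S [HS HS']]. specialize (HS' l Hl Hf).
    change (rsum (fun j => Cmod (m i j)^2) l) with (fold_right (fun j acc => Cmod (m i j) ^ 2 + acc) 0 l). lra.
  - intros H eps he. destruct (H (eps/2)) as [N [HN H']]. lra. exists N; split; auto. intros i.
    exists (eps/2); split. lra. intros l Hl Hf. apply (H' i l Hl Hf).
Qed.

Lemma pt_comb (x y z K : R) : 0 <= K -> 0 <= x -> 0 <= y -> 0 <= z -> x <= K * (y + z) ->
  x^2 <= 2*K^2*y^2 + 2*K^2*z^2.
Proof. intros. assert (x^2 <= (K*(y+z))^2) by (apply le_sq; auto).
  assert (0 <= K^2 * (y - z)^2) by (apply Rmult_le_pos; apply pow2_ge_0). nra. Qed.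

Lemma row_comb {I} (d : I -> I -> R) (m m1 m2 : I -> I -> C) K : 0 <= K ->
  row_nonexp_entries d m1 -> row_nonexp_entries d m2 ->
  (forall i j, Cmod (m i j) <= K * (Cmod (m1 i j) + Cmod (m2 i j))) -> row_nonexp_entries d m.
Proof. intros HK H1 H2 Hm. rewrite row_iff in *. intros eps he.
  set (e' := eps / (4 * (K^2+1))).
  assert (HK2 : 0 <= K^2) by apply pow2_ge_0.
  assert (he' : 0 < e') by (unfold e'; apply Rdiv_lt_0_compat; lra).
  assert (Ee : 4 * (K^2+1) * e' = eps) by (unfold e'; field; lra).
  destruct (H1 e' he') as [N1 [HN1 B1]]. destruct (H2 e' he') as [N2 [HN2 B2]].
  exists (Rmax N1 N2). split. eapply Rlt_le_trans; [exact HN1 | apply Rmax_l].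
  intros i l Hl Hf.
  assert (r1 := B1 i l Hl (fun j h => Rle_lt_trans _ _ _ (Rmax_l N1 N2) (Hf j h))).
  assert (r2 := B2 i l Hl (fun j h => Rle_lt_trans _ _ _ (Rmax_r N1 N2) (Hf j h))).
  eapply Rle_trans.
  apply rsum_le with (g := fun j => 2*K^2 * Cmod (m1 i j)^2 + 2*K^2 * Cmod (m2 i j)^2).
  { intros j _. apply pt_comb; auto; apply Cmod_ge_0. }
  rewrite rsum_plus, !rsum_scal.
  assert (K^2 * rsum (fun j => Cmod (m1 i j)^2) l <= K^2 * e') by (apply Rmult_le_compat_l; auto).
  assert (K^2 * rsum (fun j => Cmod (m2 i j)^2) l <= K^2 * e') by (apply Rmult_le_compat_l; auto).
  nra. Qed.

Lemma ball_list {I} (d : I -> I -> R)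
  (hball : forall Rad, 0 < Rad -> exists M : nat, forall (i : I) (l : list I),
             NoDup l -> (forall j, In j l -> d j i <= Rad) -> (length l <= M)%nat) :
  forall Rad, 0 < Rad -> exists M : nat, forall i, exists Bl, NoDup Bl /\
    (forall j, In j Bl <-> d j i <= Rad) /\ (length Bl <= M)%nat.
Proof. intros Rad HR. destruct (hball Rad HR) as [M HM]. exists M. intros i.
  destruct (classic (exists Bl, NoDup Bl /\ (forall j, In j Bl <-> d j i <= Rad))) as [[Bl [H1 H2]]|Hno].
  - exists Bl. split; auto. split; auto. apply (HM i); auto. intros j hj; apply H2; auto.
  - exfalso. assert (forall n, exists l, NoDup l /\ (forall j, In j l -> d j i <= Rad) /\ length l = n).
    { induction n.
      - exists nil; repeat split; [constructor | intros j []].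
      - destruct IHn as [l [Hl [Hin Hlen]]].
        assert (exists j, d j i <= Rad /\ ~ In j l).
        { apply NNPP. intros Hne. apply Hno. exists l. split; auto. intros j; split; auto.
          intros hj. apply NNPP. intros hn. apply Hne. exists j; auto. }
        destruct H as [j [hj hn]]. exists (j::l). split. constructor; auto. split.
        intros k [->|hk]; auto. simpl; auto. }
    destruct (H (S M)) as [l [Hl [Hin Hlen]]]. specialize (HM i l Hl Hin). lia.
Qed.

Lemma approx {I} (x : vec I) S : sqsum_le x S -> forall eta, 0 < eta ->
  exists F, NoDup F /\ forall l, NoDup l -> (forall k, In k l -> ~ In k F) -> sqsum x l <= eta.
Proof. intros Hx eta he.
  set (E := fun r => exists l, NoDup l /\ r = sqsum x l).
  assert (Hb : bound E). { exists S. intros r [l [Hl ->]]. apply Hx; auto. }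
  assert (He : exists r, E r). { exists 0. exists nil. split; [constructor|reflexivity]. }
  destruct (completeness E Hb He) as [s [Hub Hlub]].
  assert (exists l0, NoDup l0 /\ s - eta < sqsum x l0).
  { apply NNPP. intros Hn. assert (is_upper_bound E (s - eta)).
    { intros r [l [Hl ->]]. apply Rnot_lt_le. intros hlt. apply Hn. exists l; auto. }
    specialize (Hlub _ H). lra. }
  destruct H as [F [HF HFs]]. exists F. split; auto. intros l Hl Hdis.
  assert (sqsum x (l ++ F) <= s). { apply Hub. exists (l++F). split; auto. apply NoDup_app; auto. }
  rewrite sqsum_rsum, rsum_app in H. rewrite sqsum_rsum in HFs |- *. lra.
Qed.

Definition colP {I} (d : I -> I -> R) (T : op I) := forall eps, 0 < eps -> exists N, 0 < N /\
  forall i x S, sqsum_le x S -> (forall k, d k i <= N -> x k = 0%C) -> Cmod (T x i)^2 <= eps * S.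

Lemma P_to_col {I} d (T : op I) : lin T -> colP d T -> row_nonexp_entries d (fun i j => Cconj (T (delta j) i)).
Proof. intros HT HP. apply row_iff. intros eps he. destruct (HP eps he) as [N [HN HN']]. exists N; split; auto.
  intros i L HL Hf.
  destruct (dual_core T L i HT HL) as [E Hy].
  assert (Hz : forall k, d k i <= N -> restr (fun k => Cconj (T (delta k) i)) L k = 0%C).
  { intros k hk. apply restr_out. intros hin. specialize (Hf k hin). lra. }
  specialize (HN' i _ _ Hy Hz). rewrite E in HN'.
  rewrite (rsum_ext _ (fun j => Cmod (T (delta j) i)^2)) by (intros; rewrite Cmod_conj; auto).
  assert (HQ : 0 <= rsum (fun j => Cmod (T (delta j) i)^2) L) by (apply rsum_nonneg; intros; apply pow2_ge_0).
  rewrite Cmod_RtoC_pos in HN' by auto. apply Q_le; auto; lra.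
Qed.

Lemma Csub_self (a : C) : (a - a)%C = 0%C.
Proof. ring. Qed.

Lemma lin_split {I} (T : op I) (x u v : vec I) i : lin T -> l2 u -> l2 v -> x = (fun k => (u k + v k)%C) ->
  T x i = (T u i + T v i)%C.
Proof. intros [Ha _] Hu Hv ->. rewrite Ha; auto. Qed.

Lemma cs_bound {I} (x : vec I) (t : I -> C) F :
  Cmod (csum (fun j => (x j * t j)%C) F)^2 <= rsum (fun k => Cmod (x k)^2) F * rsum (fun k => Cmod (t k)^2) F.
Proof. eapply Rle_trans; [|apply (CS (fun k => Cmod (x k)) (fun k => Cmod (t k)))].
  apply le_sq. apply Cmod_ge_0. eapply Rle_trans. apply csum_bound. right. apply rsum_ext. intros; apply Cmod_mult. Qed.

Lemma col_to_P {I} d (T : op I) M : lin T -> opnorm_le T M ->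
  row_nonexp_entries d (fun i j => Cconj (T (delta j) i)) -> colP d T.
Proof. intros HT HM Hc. rewrite row_iff in Hc. intros eps he.
  destruct (Hc (eps/2)) as [N [HN HB]]; [lra|]. exists N. split; auto.
  intros i x S Hx Hsupp.
  assert (HS : 0 <= S) by (eapply sqsum_le_nonneg; eauto).
  apply (eps_lim _ _ (2*M^2)); [pose proof (pow2_ge_0 M); lra|]. intros eta heta.
  destruct (approx x S Hx eta heta) as [F [HF HFb]].
  set (F' := filter (pf (fun k => N < d k i)) F).
  assert (HF' : NoDup F') by (apply NoDup_filter; auto).
  set (u := restr x F'). set (v := fun k => (x k - u k)%C).
  assert (Ex : x = fun k => (u k + v k)%C) by (apply functional_extensionality; intros; unfold v; ring).
  assert (Hv : sqsum_le v eta).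
  { intros l Hl. rewrite sqsum_rsum, (rsum_filter (fun k => In k F)).
    rewrite (rsum_ext (fun k => Cmod (v k)^2) (fun _ => 0) (filter (pf (fun k => In k F)) l)).
    2:{ intros k hk. apply in_filter_pf in hk. destruct hk as [_ hk].
        destruct (Rlt_le_dec N (d k i)) as [hl|hl].
        - unfold v, u. rewrite restr_in by (apply in_filter_pf; auto).
          rewrite Csub_self, Cmod_0. ring.
        - assert (H0 : x k = 0%C) by auto. unfold v, u, restr.
          destruct (excluded_middle_informative _); rewrite H0;
          rewrite Csub_self, Cmod_0; ring. }
    rewrite rsum_zero, Rplus_0_l.
    rewrite (rsum_ext _ (fun k => Cmod (x k)^2)).
    - apply HFb. apply NoDup_filter; auto. intros k hk; apply in_filter_pf in hk; tauto.
    - intros k hk. apply in_filter_pf in hk. unfold v, u. rewrite restr_out.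
      + f_equal. f_equal. ring.
      + intros hin. apply in_filter_pf in hin. tauto. }
  assert (Hu : sqsum_le u (sqsum x F')) by (apply sqsum_le_restr; auto).
  rewrite (lin_split T x u v i HT (l2_of _ _ Hu) (l2_of _ _ Hv) Ex).
  assert (Bv : Cmod (T v i)^2 <= M^2 * eta) by (eapply opnorm_coord; eauto).
  assert (Bu : Cmod (T u i)^2 <= S * (eps/2)).
  { unfold u. rewrite (lin_restr T HT F' HF'). eapply Rle_trans. apply cs_bound.
    apply Rmult_le_compat.
    - apply rsum_nonneg; intros; apply pow2_ge_0.
    - apply rsum_nonneg; intros; apply pow2_ge_0.
    - apply Hx; auto.
    - specialize (HB i F' HF'). rewrite (rsum_ext _ (fun j => Cmod (T (delta j) i)^2)) in HB
        by (intros; rewrite Cmod_conj; auto).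
      apply HB. intros j hj. apply in_filter_pf in hj; tauto. }
  pose proof (Cmod_plus_sq (T u i) (T v i)). nra.
Qed.
Lemma colP_mul {I} (d : I -> I -> R) (A B : op I) MA MB
  (hd : quasi_distance d)
  (hball : forall Rad, 0 < Rad -> exists M : nat, forall (i : I) (l : list I),
             NoDup l -> (forall j, In j l -> d j i <= Rad) -> (length l <= M)%nat) :
  lin A -> lin B -> opnorm_le A MA -> opnorm_le B MB -> colP d A -> colP d B -> colP d (op_mul A B).
Proof. intros HA HB HMA HMB PA PB eps he.
  destruct hd as [_ [_ [_ tri]]].
  assert (HMA2 : 0 <= MA^2) by apply pow2_ge_0. assert (HMB2 : 0 <= MB^2) by apply pow2_ge_0.
  set (e1 := eps / (4 * (MB^2+1))).
  assert (he1 : 0 < e1) by (unfold e1; apply Rdiv_lt_0_compat; lra).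
  assert (Ee1 : e1 * (4 * (MB^2+1)) = eps) by (unfold e1; field; lra).
  destruct (PA e1 he1) as [R0 [HR0 PA']].
  destruct (ball_list d hball R0 HR0) as [MR HMR].
  set (a := INR MR).
  assert (Ha : 0 <= a) by apply pos_INR.
  assert (Ha2 : 0 <= a^2) by apply pow2_ge_0.
  set (e2 := eps / (4 * (a^2+1) * (MA^2+1))).
  assert (he2 : 0 < e2) by (unfold e2; apply Rdiv_lt_0_compat; [lra|]; apply Rmult_lt_0_compat; lra).
  assert (Ee2 : e2 * (4 * (a^2+1) * (MA^2+1)) = eps) by (unfold e2; field; lra).
  destruct (PB e2 he2) as [N2 [HN2 PB']].
  exists (N2 + R0). split. lra.
  intros i x S Hx Hsupp. unfold op_mul.
  assert (HS : 0 <= S) by (eapply sqsum_le_nonneg; eauto).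
  set (z := B x).
  assert (Hz : sqsum_le z (MB^2 * S)) by (apply HMB; auto).
  destruct (HMR i) as [Bl [HBl [HBin HBlen]]].
  set (zin := restr z Bl). set (zout := fun k => (z k - zin k)%C).
  assert (Ez : z = fun k => (zin k + zout k)%C)
    by (apply functional_extensionality; intros; unfold zout; ring).
  assert (Hzout : sqsum_le zout (MB^2 * S)).
  { apply (sqsum_le_dom z); auto. intros k. unfold zout, zin, restr.
    destruct (excluded_middle_informative (In k Bl)).
    - rewrite Csub_self, Cmod_0; apply Cmod_ge_0.
    - right; f_equal; ring. }
  assert (Hzin : sqsum_le zin (sqsum z Bl)) by (apply sqsum_le_restr; auto).
  rewrite (lin_split A z zin zout i HA (l2_of _ _ Hzin) (l2_of _ _ Hzout) Ez).
  assert (Bout : Cmod (A zout i)^2 <= e1 * (MB^2 * S)).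
  { apply PA'; auto. intros k hk. unfold zout, zin. rewrite restr_in by (apply HBin; auto).
    apply Csub_self. }
  assert (HMR' : INR (length Bl) <= a) by (apply le_INR; auto).
  assert (Bin : Cmod (A zin i)^2 <= (a * (e2 * S)) * (a * (MA^2 * 1))).
  { unfold zin. rewrite (lin_restr A HA Bl HBl). eapply Rle_trans. apply cs_bound.
    apply Rmult_le_compat.
    - apply rsum_nonneg; intros; apply pow2_ge_0.
    - apply rsum_nonneg; intros; apply pow2_ge_0.
    - eapply Rle_trans. apply rsum_const_le with (c := e2 * S).
      + intros k hk. apply (PB' k x S Hx). intros j hj. apply Hsupp.
        pose proof (tri j i k). apply HBin in hk. lra.
      + apply Rmult_le_compat_r; auto. apply Rmult_le_pos; lra.
    - eapply Rle_trans. apply rsum_const_le with (c := MA^2 * 1).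
      + intros k _. eapply opnorm_coord; eauto. apply sqsum_le_delta.
      + apply Rmult_le_compat_r; auto. lra. }
  pose proof (Cmod_plus_sq (A zin i) (A zout i)) as Hp.
  assert (Hab : a^2 * MA^2 <= (a^2+1) * (MA^2+1)) by nra.
  assert (H1 : a^2 * MA^2 * e2 <= eps / 4).
  { assert (a^2 * MA^2 * e2 <= (a^2+1) * (MA^2+1) * e2) by (apply Rmult_le_compat_r; lra). nra. }
  assert (H2 : e1 * MB^2 <= eps / 4) by nra.
  assert (H3 : (a * (e2 * S)) * (a * (MA^2 * 1)) = (a^2 * MA^2 * e2) * S) by ring.
  assert (H4 : (a^2 * MA^2 * e2) * S <= eps / 4 * S) by (apply Rmult_le_compat_r; auto).
  assert (H5 : e1 * (MB^2 * S) <= eps / 4 * S) by (rewrite <- Rmult_assoc; apply Rmult_le_compat_r; auto).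
  lra.
Qed.

Lemma row_mul {I} (d : I -> I -> R) (A B : op I) MA MB
  (hd : quasi_distance d)
  (hball : forall Rad, 0 < Rad -> exists M : nat, forall (i : I) (l : list I),
             NoDup l -> (forall j, In j l -> d j i <= Rad) -> (length l <= M)%nat) :
  lin A -> opnorm_le A MA -> opnorm_le B MB ->
  row_nonexp_entries d (fun i j => A (delta i) j) -> row_nonexp_entries d (fun i j => B (delta i) j) ->
  row_nonexp_entries d (fun i j => op_mul A B (delta i) j).
Proof. intros HA HMA HMB RA RB. rewrite row_iff in *. intros eps he.
  destruct hd as [_ [_ [_ tri]]].
  assert (HMA2 : 0 <= MA^2) by apply pow2_ge_0. assert (HMB2 : 0 <= MB^2) by apply pow2_ge_0.
  set (e1 := eps / (4 * (MA^2+1))).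
  assert (he1 : 0 < e1) by (unfold e1; apply Rdiv_lt_0_compat; lra).
  assert (Ee1 : e1 * (4 * (MA^2+1)) = eps) by (unfold e1; field; lra).
  destruct (RB e1 he1) as [R0 [HR0 RB']].
  destruct (ball_list d hball R0 HR0) as [MR HMR].
  set (a := INR MR).
  assert (Ha : 0 <= a) by apply pos_INR.
  set (e2 := eps / (4 * (MB^2+1) * (a+1))).
  assert (he2 : 0 < e2) by (unfold e2; apply Rdiv_lt_0_compat; [lra|]; apply Rmult_lt_0_compat; lra).
  assert (Ee2 : e2 * (4 * (MB^2+1) * (a+1)) = eps) by (unfold e2; field; lra).
  destruct (RA e2 he2) as [N2 [HN2 RA']].
  exists (N2 + R0). split. lra.
  intros i L HL Hf. unfold op_mul.
  set (v := B (delta i)).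
  assert (Hv : sqsum_le v (MB^2 * 1)) by (apply HMB, sqsum_le_delta).
  destruct (HMR i) as [Bl [HBl [HBin HBlen]]].
  set (vin := restr v Bl). set (vout := fun k => (v k - vin k)%C).
  assert (Ev : v = fun k => (vin k + vout k)%C)
    by (apply functional_extensionality; intros; unfold vout; ring).
  assert (Hvout : sqsum_le vout e1).
  { intros l Hl. rewrite sqsum_rsum, (rsum_filter (fun k => In k Bl)).
    rewrite (rsum_ext _ (fun _ => 0) (filter (pf (fun k => In k Bl)) l)).
    2:{ intros k hk; apply in_filter_pf in hk; unfold vout, vin; rewrite restr_in by tauto.
        rewrite Csub_self, Cmod_0; ring. }
    rewrite rsum_zero, Rplus_0_l.
    rewrite (rsum_ext _ (fun k => Cmod (B (delta i) k)^2)).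
    - apply RB'. apply NoDup_filter; auto. intros j hj. apply in_filter_pf in hj.
      destruct hj as [_ hj]. rewrite HBin in hj. lra.
    - intros k hk. apply in_filter_pf in hk. unfold vout, vin. rewrite restr_out by tauto.
      unfold v. f_equal. f_equal. ring. }
  assert (Hvin : sqsum_le vin (sqsum v Bl)) by (apply sqsum_le_restr; auto).
  assert (HMR' : INR (length Bl) <= a) by (apply le_INR; auto).
  eapply Rle_trans.
  apply rsum_le with (g := fun k => 2 * Cmod (A vin k)^2 + 2 * Cmod (A vout k)^2).
  { intros k _. rewrite (lin_split A v vin vout k HA (l2_of _ _ Hvin) (l2_of _ _ Hvout) Ev).
    apply Cmod_plus_sq. }
  rewrite rsum_plus, !rsum_scal.
  assert (Bout : rsum (fun k => Cmod (A vout k)^2) L <= MA^2 * e1) by (apply HMA; auto).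
  assert (Bin : rsum (fun k => Cmod (A vin k)^2) L <= MB^2 * 1 * (a * e2)).
  { eapply Rle_trans.
    apply rsum_le with (g := fun k => sqsum v Bl * rsum (fun j => Cmod (A (delta j) k)^2) Bl).
    { intros k _. unfold vin. rewrite (lin_restr A HA Bl HBl). apply cs_bound. }
    rewrite rsum_scal. apply Rmult_le_compat.
    - rewrite sqsum_rsum. apply rsum_nonneg; intros; apply pow2_ge_0.
    - apply rsum_nonneg; intros; apply rsum_nonneg; intros; apply pow2_ge_0.
    - apply Hv; auto.
    - rewrite (rsum_swap (fun k j => Cmod (A (delta j) k)^2) L Bl).
      eapply Rle_trans. apply rsum_const_le with (c := e2).
      + intros j hj. apply RA'; auto. intros k hk. pose proof (Hf k hk).
        pose proof (tri k i j). apply HBin in hj. lra.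
      + apply Rmult_le_compat_r; lra. }
  assert (H1 : MB^2 * 1 * (a * e2) <= eps / 4).
  { assert (MB^2 * a <= (MB^2+1)*(a+1)) by nra.
    assert (MB^2 * a * e2 <= (MB^2+1)*(a+1) * e2) by (apply Rmult_le_compat_r; lra). nra. }
  assert (H2 : MA^2 * e1 <= eps / 4) by nra.
  lra.
Qed.

Lemma lin_sub {I} (A B : op I) : lin A -> lin B -> lin (op_sub A B).
Proof. intros [A1 A2] [B1 B2]. split.
  - intros x y hx hy. unfold op_sub. rewrite A1, B1 by auto.
    apply functional_extensionality; intros; ring.
  - intros c x hx. unfold op_sub. rewrite A2, B2 by auto.
    apply functional_extensionality; intros; ring.
Qed.
Theorem theorem7p7 (I : Type) (d : I -> I -> R)
  (hd : quasi_distance d)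
  (hcount : exists f : I -> nat, forall i j, f i = f j -> i = j)
  (hball : forall Rad, 0 < Rad -> exists M : nat, forall (i : I) (l : list I),
             NoDup l -> (forall j, In j l -> d j i <= Rad) -> (length l <= M)%nat) :
  (* (1) *)
  (forall A B : op I, inC d A -> inC d B -> inC d (op_add A B)) /\
  (forall (c : C) (A : op I), inC d A -> inC d (op_scal c A)) /\
  (* (2) *)
  (forall A B : op I, inC d A -> inC d B -> inC d (op_mul A B)) /\
  (* (3) *)
  (forall (S : Type) (F : (S -> Prop) -> Prop), ProperFilter F ->
     forall (Aj : S -> op I) (A : op I),
       (forall j, inC d (Aj j)) -> bounded_op A ->
       (forall eps, 0 < eps ->
          F (fun j => exists c, 0 <= c /\ c < eps /\ opnorm_le (op_sub A (Aj j)) c)) ->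
       inC d A) /\
  (* closure under adjoints (part of "C is a C*-algebra"): B = A^* *)
  (forall A B : op I, inC d A -> bounded_op B ->
     (forall i j, B (delta i) j = Cconj (A (delta j) i)) -> inC d B).
Proof.
  split; [|split; [|split; [|split]]].
  - intros A B [[A1 [A2 [MA [HMA0 HMA]]]] [RA CA]] [[B1 [B2 [MB [HMB0 HMB]]]] [RB CB]].
    split.
    + split; [|split].
      * intros x y hx hy. unfold op_add. rewrite A1, B1 by auto.
        apply functional_extensionality; intros; ring.
      * intros c x hx. unfold op_add. rewrite A2, B2 by auto.
        apply functional_extensionality; intros; ring.
      * exists (2*(MA+MB)). split. lra. intros x S Hx. unfold op_add.
        assert (HS : 0 <= S) by (eapply sqsum_le_nonneg; eauto).
        eapply sqsum_le_mono. apply sqsum_le_add; [apply HMA|apply HMB]; eauto.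
        assert (2 * (MA^2*S) + 2 * (MB^2*S) <= (2*(MA+MB))^2 * S); [|lra].
        assert (2*MA^2 + 2*MB^2 <= (2*(MA+MB))^2) by nra.
        replace (2 * (MA^2*S) + 2 * (MB^2*S)) with ((2*MA^2 + 2*MB^2) * S) by ring.
        apply Rmult_le_compat_r; auto.
    + split.
      * apply (row_comb d _ _ _ 1 ltac:(lra) RA RB). intros i j. unfold op_add.
        rewrite Rmult_1_l. apply Cmod_triangle.
      * apply (row_comb d _ _ _ 1 ltac:(lra) CA CB). intros i j. unfold op_add.
        rewrite Cplus_conj, Rmult_1_l. apply Cmod_triangle.
  - intros c A [[A1 [A2 [MA [HMA0 HMA]]]] [RA CA]].
    split.
    + split; [|split].
      * intros x y hx hy. unfold op_scal. rewrite A1 by auto.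
        apply functional_extensionality; intros; ring.
      * intros c' x hx. unfold op_scal. rewrite A2 by auto.
        apply functional_extensionality; intros; ring.
      * exists (Cmod c * MA). split. apply Rmult_le_pos; auto; apply Cmod_ge_0.
        intros x S Hx. unfold op_scal. eapply sqsum_le_mono. apply sqsum_le_scal. apply HMA; eauto.
        right; ring.
    + split.
      * apply (row_comb d _ _ _ (Cmod c) (Cmod_ge_0 c) RA RA). intros i j. unfold op_scal.
        rewrite Cmod_mult. pose proof (Cmod_ge_0 c). pose proof (Cmod_ge_0 (A (delta i) j)). nra.
      * apply (row_comb d _ _ _ (Cmod c) (Cmod_ge_0 c) CA CA). intros i j. unfold op_scal.
        rewrite Cmult_conj, Cmod_mult, Cmod_conj.
        pose proof (Cmod_ge_0 c). pose proof (Cmod_ge_0 (Cconj (A (delta j) i))). nra.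
  - intros A B [[A1 [A2 [MA [HMA0 HMA]]]] [RA CA]] [[B1 [B2 [MB [HMB0 HMB]]]] [RB CB]].
    assert (HAl : lin A) by (split; auto). assert (HBl : lin B) by (split; auto).
    assert (Hbd : bounded_op (op_mul A B)).
    { split; [|split].
      * intros x y [Sx hx] [Sy hy]. unfold op_mul. rewrite B1 by (eexists; eauto).
        rewrite A1; auto; eexists; apply HMB; eauto.
      * intros c x [Sx hx]. unfold op_mul. rewrite B2 by (eexists; eauto).
        rewrite A2; auto; eexists; apply HMB; eauto.
      * exists (MA * MB). split. apply Rmult_le_pos; auto.
        intros x S Hx. unfold op_mul. eapply sqsum_le_mono. apply HMA. apply HMB. eauto.
        right; ring. }
    split; auto. split.
    + apply (row_mul d A B MA MB hd hball HAl HMA HMB RA RB).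
    + apply P_to_col. apply bounded_lin; auto.
      apply (colP_mul d A B MA MB hd hball HAl HBl HMA HMB).
      * apply (col_to_P d A MA HAl HMA CA).
      * apply (col_to_P d B MB HBl HMB CB).
  - intros S F HF Aj A HAj HA Hlim.
    assert (HAl : lin A) by (apply bounded_lin; auto).
    split; auto. split.
    + apply row_iff. intros eps he.
      set (del := Rmin 1 (eps/8)).
      assert (hdel : 0 < del) by (unfold del; apply Rmin_pos; lra).
      assert (hdel1 : del <= 1) by apply Rmin_l.
      assert (hdel2 : del <= eps/8) by apply Rmin_r.
      destruct (filter_ex _ (Hlim del hdel)) as [j [c [hc0 [hcd Hc]]]].
      destruct (HAj j) as [[J1 [J2 _]] [RJ CJ]]. rewrite row_iff in RJ.
      destruct (RJ (eps/4)) as [N [HN RJ']]; [lra|]. exists N. split; auto.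
      intros i L HL Hf.
      eapply Rle_trans.
      apply rsum_le with (g := fun k => 2 * Cmod (Aj j (delta i) k)^2 + 2 * Cmod (op_sub A (Aj j) (delta i) k)^2).
      { intros k _. replace (A (delta i) k) with (Aj j (delta i) k + op_sub A (Aj j) (delta i) k)%C
          by (unfold op_sub; ring). apply Cmod_plus_sq. }
      rewrite rsum_plus, !rsum_scal.
      pose proof (RJ' i L HL Hf).
      pose proof (Hc (delta i) 1 (sqsum_le_delta i) L HL) as Hs. rewrite sqsum_rsum in Hs.
      assert (c^2 <= eps/8) by nra. lra.
    + apply row_iff. intros eps he.
      set (del := Rmin 1 (eps/8)).
      assert (hdel : 0 < del) by (unfold del; apply Rmin_pos; lra).
      assert (hdel1 : del <= 1) by apply Rmin_l.
      assert (hdel2 : del <= eps/8) by apply Rmin_r.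
      destruct (filter_ex _ (Hlim del hdel)) as [j [c [hc0 [hcd Hc]]]].
      destruct (HAj j) as [HJ [RJ CJ]]. rewrite row_iff in CJ.
      assert (HTl : lin (op_sub A (Aj j))) by (apply lin_sub; auto; apply bounded_lin; auto).
      destruct (CJ (eps/4)) as [N [HN CJ']]; [lra|]. exists N. split; auto.
      intros i L HL Hf.
      eapply Rle_trans.
      apply rsum_le with (g := fun k => 2 * Cmod (Cconj (Aj j (delta k) i))^2 + 2 * Cmod (op_sub A (Aj j) (delta k) i)^2).
      { intros k _. rewrite <- (Cmod_conj (op_sub A (Aj j) (delta k) i)).
        replace (Cconj (A (delta k) i)) with (Cconj (Aj j (delta k) i) + Cconj (op_sub A (Aj j) (delta k) i))%C
          by (rewrite <- Cplus_conj; f_equal; unfold op_sub; ring). apply Cmod_plus_sq. }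
      rewrite rsum_plus, !rsum_scal.
      pose proof (CJ' i L HL Hf).
      pose proof (dual_norm (op_sub A (Aj j)) c L i HTl Hc HL) as Hs.
      assert (c^2 <= eps/8) by nra. lra.
  - intros A B [HA [RA CA]] HB Hadj. split; auto. split.
    + apply (row_comb d _ _ _ 1 ltac:(lra) CA CA). intros i j. rewrite Hadj.
      pose proof (Cmod_ge_0 (Cconj (A (delta j) i))). lra.
    + apply (row_comb d _ _ _ 1 ltac:(lra) RA RA). intros i j. rewrite Hadj, Cconj_conj.
      pose proof (Cmod_ge_0 (A (delta i) j)). lra.
Qed.
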